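(* Fix $s\in\mathbb N$ with $s\ge2$, $q\in\mathbb N\cup\{0\}$, and indices $\alpha_1,\dots,\alpha_q\in\{1,\dots,s\}$ (not necessarily distinct). For $\eta\in\mathbb N$ with $\eta\ge s$ and distinct reals $w_1,\dots,w_s$, $$\sum_{\substack{x_1+\dots+x_s=\eta\\ x_1,\dots,x_s\ge 1}} x_{\alpha_1}\cdots x_{\alpha_q}\, w_1^{x_1}\cdots w_s^{x_s}=\frac{\sum_{l=1}^s w_l^{\eta+2-s}f_{l,\eta}(w_1,\dots,w_s)}{\left(\prod_{1\le i<j\le s}(w_i-w_j)\right)^{2^q}},$$ where each $f_{l,\eta}\in\mathbb R[\eta][w_1,\dots,w_s]$ is homogeneous in $w_1,\dots,w_s$ of degree $2^q\binom{s}{2}+s-2$, and its coefficients are polynomials in $\eta$ of degree at most $q$.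
   Context: The sum runs over integer tuples $(x_1,\dots,x_s)$. *)

(* Defs.v *)
From mathcomp Require Import all_boot all_algebra.
From mathcomp Require Import Rstruct.
From mathcomp Require Import mpoly.
From Stdlib Require Rdefinitions.
Set Implicit Arguments. Unset Strict Implicit. Unset Printing Implicit Defensive.
Import GRing.Theory.
Local Open Scope ring_scope.

Notation Rr := Rdefinitions.R.

Definition composition (s eta : nat) (x : {ffun 'I_s -> 'I_eta.+1}) : bool :=
  [forall i, (0 < (x i : nat))%N] && ((\sum_(i < s) (x i : nat))%N == eta).

Definition lhsA2 (s q eta : nat) (alpha : 'I_q -> 'I_s) (w : 'I_s -> Rr) : Rr :=
  \sum_(x : {ffun 'I_s -> 'I_eta.+1} | composition x)
     (\prod_(j < q) ((x (alpha j) : nat)%:R : Rr)) * \prod_(i < s) w i ^+ (x i : nat).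

Definition vdm (s : nat) (w : 'I_s -> Rr) : Rr :=
  \prod_(i < s) \prod_(j < s | (i < j)%N) (w i - w j).

Definition evalEW (s : nat) (f : {mpoly {poly Rr}[s]}) (eta : Rr) (w : 'I_s -> Rr) : Rr :=
  (map_mpoly (horner_eval eta) f).@[w].

(* Main.v *)
Require Import Defs.
From mathcomp Require Import all_boot all_algebra.
From mathcomp Require Import Rstruct.
From mathcomp Require Import mpoly.
From mathcomp Require Import ring zify.
Set Implicit Arguments. Unset Strict Implicit. Unset Printing Implicit Defensive.
Import GRing.Theory.
Local Open Scope ring_scope.
Section Core.
Variable (F : fieldType) (s M : nat) (w : 'I_s -> F).
Hypothesis winj : injective w.

Definition suppT (T : {set 'I_s}) (x : {ffun 'I_s -> 'I_M.+1}) :=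
  [forall i, (0 < (x i : nat))%N == (i \in T)].
Definition sumx (x : {ffun 'I_s -> 'I_M.+1}) := (\sum_(i < s) (x i : nat))%N.

Definition Qs (T : {set 'I_s}) (n : nat) : F :=
  \sum_(x : {ffun 'I_s -> 'I_M.+1} | suppT T x && (sumx x == n)) \prod_(i < s) w i ^+ (x i : nat).

Definition Pi (T : {set 'I_s}) (l : 'I_s) : F := \prod_(j in T | j != l) (w l - w j).
Definition Sg (T : {set 'I_s}) (m : nat) : F := \sum_(l in T) w l ^+ m / Pi T l.

Lemma Pi_neq0 T l : Pi T l != 0.
Proof.
apply/prodf_neq0 => j /andP[_ jl]; rewrite subr_eq0; apply/eqP => /winj /eqP.
by rewrite eq_sym (negbTE jl).
Qed.

Lemma Pi_rem (T : {set 'I_s}) l b : b \in T -> b != l -> Pi T l = (w l - w b) * Pi (T :\ b) l.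
Proof.
move=> bT bl; rewrite /Pi (bigD1 b) /=; last by rewrite bT.
congr (_ * _); apply: eq_bigl => j; rewrite in_setD1; case: (j =P b) => [->|]; rewrite ?eqxx ?andbF ?andbT //=.
Qed.

Lemma wsub_neq0 l b : l != b -> w l - w b != 0.
Proof. by move=> lb; rewrite subr_eq0; apply: contra lb => /eqP /winj ->. Qed.

Lemma Sg_shift (T : {set 'I_s}) a m : a \in T -> Sg T m.+1 = w a * Sg T m + Sg (T :\ a) m.
Proof.
move=> aT; apply/eqP; rewrite addrC -subr_eq /Sg mulr_sumr -sumrB.
rewrite (bigD1 a) //= [X in _ == X](eq_bigl (fun l => (l \in T) && (l != a))); last first.
  by move=> l; rewrite in_setD1 andbC.
rewrite exprS mulrA -mulrBl subrr mul0r add0r; apply/eqP; apply: eq_bigr => l /andP[lT la].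
rewrite (@Pi_rem T l a aT); last by rewrite eq_sym.
have h1 := wsub_neq0 la; have h2 := Pi_neq0 (T :\ a) l.
rewrite exprS; move: (w l ^+ m) h1 h2 => X; move: (Pi (T :\ a) l) => P h1 h2.
by field; rewrite h1 h2.
Qed.

Lemma setD1C (T : {set 'I_s}) a b : T :\ a :\ b = T :\ b :\ a.
Proof. by apply/setP => x; rewrite !in_setD1; case: (x == a); case: (x == b). Qed.

Lemma Sg_two (T : {set 'I_s}) a b m : a \in T -> b \in T -> a != b ->
  (w a - w b) * Sg T m = Sg (T :\ b) m - Sg (T :\ a) m.
Proof.
move=> aT bT ab.
have key : forall l, l \in T -> (w a - w b) * (w l ^+ m / Pi T l) =
   (if l != b then w l ^+ m / Pi (T :\ b) l else 0) -
   (if l != a then w l ^+ m / Pi (T :\ a) l else 0).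
  move=> l lT; case: (l =P a) => [->|la]; first rewrite ab /=.
    rewrite (@Pi_rem T a b bT); last by rewrite eq_sym.
    have h1 := wsub_neq0 ab; have h2 := Pi_neq0 (T :\ b) a.
    by field; rewrite h1 h2.
  case: (l =P b) => [->|lb] /=.
    rewrite (@Pi_rem T b a aT) //.
    have h1 : w b - w a != 0 by apply: wsub_neq0; rewrite eq_sym.
    have h2 := Pi_neq0 (T :\ a) b.
    by field; rewrite h1 h2.
  have la' : l != a by apply/eqP.
  have lb' : l != b by apply/eqP.
  rewrite (@Pi_rem T l a aT); last by rewrite eq_sym.
  rewrite (@Pi_rem (T :\ a) l b); last by rewrite eq_sym. 2: by rewrite in_setD1 eq_sym ab.
  rewrite (@Pi_rem (T :\ b) l a); last by rewrite eq_sym. 2: by rewrite in_setD1 ab.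
  rewrite setD1C.
  have h1 := wsub_neq0 la'; have h2 := wsub_neq0 lb'; have h3 := Pi_neq0 (T :\ b :\ a) l.
  have h4 := wsub_neq0 ab.
  by field; rewrite h1 h2 h3.
rewrite /Sg mulr_sumr (eq_bigr _ key) sumrB; congr (_ - _).
  rewrite -big_mkcondr /=; apply: eq_bigl => l; by rewrite in_setD1 andbC.
rewrite -big_mkcondr /=; apply: eq_bigl => l; by rewrite in_setD1 andbC.
Qed.

Lemma Sg0 (T : {set 'I_s}) : Sg T 0 = (#|T| == 1)%N%:R.
Proof.
move: (leqnn #|T|); move: {2}#|T| => k; elim: k T => [|K IH] T hT.
  move: hT; rewrite leqn0 cards_eq0 => /eqP ->.
  by rewrite /Sg big_set0 cards0.
move: hT; rewrite leq_eqVlt => /orP[/eqP cT|]; last by rewrite ltnS; apply: IH.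
destruct K as [|K].
  have [a ->] : exists a, T = [set a] by apply/cards1P; rewrite cT.
  rewrite /Sg big_set1 /Pi expr0 /= big1 ?invr1 ?mulr1 ?cards1 ?eqxx //.
  by move=> j /andP[]; rewrite in_set1 => ->.
have : (0 < #|T|)%N by rewrite cT.
rewrite card_gt0 => /set0Pn [a aT].
have cTa : #|T :\ a| = K.+1 by move: cT; rewrite (cardsD1 a) aT add1n => -[].
have : (0 < #|T :\ a|)%N by rewrite cTa.
rewrite card_gt0 => /set0Pn [b]; rewrite in_setD1 => /andP[ba bT].
have cTb : #|T :\ b| = K.+1 by move: cT; rewrite (cardsD1 b) bT add1n => -[].
have := Sg_two 0 aT bT; rewrite eq_sym ba => /(_ isT).
rewrite (IH (T :\ b)) ?cTb // (IH (T :\ a)) ?cTa // subrr => /eqP; rewrite mulf_eq0.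
rewrite (negbTE (wsub_neq0 _)); last by rewrite eq_sym.
rewrite /= => /eqP ->.
by rewrite cT.
Qed.


Definition upd (x : {ffun 'I_s -> 'I_M.+1}) (a : 'I_s) (k : nat) : {ffun 'I_s -> 'I_M.+1} :=
  [ffun i => if i == a then inord k else x i].

Lemma upd_a x a k : (k <= M)%N -> (upd x a k a : nat) = k.
Proof. by move=> kM; rewrite ffunE eqxx inordK. Qed.

Lemma upd_o x a k i : i != a -> upd x a k i = x i.
Proof. by move=> ia; rewrite ffunE (negbTE ia). Qed.

Lemma upd_upd x a k k' : upd (upd x a k) a k' = upd x a k'.
Proof. by apply/ffunP => i; rewrite !ffunE; case: (i == a). Qed.

Lemma upd_id x a : upd x a (x a) = x.
Proof.
apply/ffunP => i; rewrite !ffunE; case: (i =P a) => [->|] //.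
by apply: val_inj; rewrite /= inordK.
Qed.

Lemma upd_eq x a k : (k <= M)%N -> (upd x a k == x) = ((x a : nat) == k).
Proof.
move=> kM; apply/eqP/eqP => [<-|xa]; first by rewrite upd_a.
by rewrite -{2}(upd_id x a) xa.
Qed.

Definition restS (a : 'I_s) (T : {set 'I_s}) (x : {ffun 'I_s -> 'I_M.+1}) :=
  [forall i, (i != a) ==> ((0 < (x i : nat))%N == (i \in T))].
Definition restsum (a : 'I_s) (x : {ffun 'I_s -> 'I_M.+1}) := (\sum_(i | i != a) (x i : nat))%N.
Definition restprod (a : 'I_s) (x : {ffun 'I_s -> 'I_M.+1}) := \prod_(i | i != a) w i ^+ (x i : nat).

Lemma suppT_split a T (x : {ffun 'I_s -> 'I_M.+1}) : suppT T x = ((0 < (x a : nat))%N == (a \in T)) && restS a T x.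
Proof.
apply/forallP/andP => [H|[Ha /forallP H] i]; first by split; [exact: H | apply/forallP => i; apply/implyP => _; exact: H].
by case: (i =P a) => [->//|/eqP ia]; move/implyP: (H i); apply.
Qed.

Lemma restS_upd a T (x : {ffun 'I_s -> 'I_M.+1}) k : restS a T (upd x a k) = restS a T x.
Proof.
by apply: eq_forallb => i; case: (i =P a) => [//|/eqP ia]; rewrite /= upd_o.
Qed.

Lemma restS_D1 a T (x : {ffun 'I_s -> 'I_M.+1}) : restS a (T :\ a) x = restS a T x.
Proof.
by apply: eq_forallb => i; case: (i =P a) => [//|/eqP ia]; rewrite /= in_setD1 ia.
Qed.

Lemma restsum_upd a (x : {ffun 'I_s -> 'I_M.+1}) k : restsum a (upd x a k) = restsum a x.
Proof. by apply: eq_bigr => i ia; rewrite upd_o. Qed.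

Lemma restprod_upd a (x : {ffun 'I_s -> 'I_M.+1}) k : restprod a (upd x a k) = restprod a x.
Proof. by apply: eq_bigr => i ia; rewrite upd_o. Qed.

Lemma sumx_split a (x : {ffun 'I_s -> 'I_M.+1}) : sumx x = (x a + restsum a x)%N.
Proof. by rewrite /sumx (bigD1 a). Qed.

Lemma prod_split a (x : {ffun 'I_s -> 'I_M.+1}) : \prod_(i < s) w i ^+ (x i : nat) = w a ^+ (x a : nat) * restprod a x.
Proof. by rewrite (bigD1 a). Qed.

Lemma Qs_rec (T : {set 'I_s}) a n : a \in T -> (n.+1 <= M)%N -> Qs T n.+1 = w a * (Qs T n + Qs (T :\ a) n).
Proof.
move=> aT nM; rewrite /Qs (bigID (fun x : {ffun 'I_s -> 'I_M.+1} => (x a : nat) == 1%N)) /= mulrDr [in RHS]addrC.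
have M1 : (1 <= M)%N by apply: leq_trans nM.
congr (_ + _).
  rewrite (reindex_onto (fun y => upd y a 1) (fun x => upd x a 0)) /=; last first.
    by move=> x /andP[_ /eqP xa]; rewrite upd_upd -xa upd_id.
  rewrite mulr_sumr; apply: eq_big => y.
    rewrite upd_upd upd_eq // !(suppT_split a) restS_upd restS_D1 upd_a // eqxx.
    rewrite (sumx_split a (upd y a 1)) upd_a // restsum_upd (sumx_split a y) setD11 /= aT /=.
    move: (restS a T y) (restsum a y) (y a : nat) => b r [|k] /=.
      by rewrite add1n add0n eqSS andbT andbC.
    by rewrite andbF.
  move=> /andP[_ /eqP ya].
  have ya0 : (y a : nat) = 0%N by rewrite -ya upd_a.
  by rewrite !(prod_split a) upd_a // restprod_upd ya0 expr1 expr0 mul1r.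
rewrite (reindex_onto (fun y => upd y a (y a).+1) (fun x => upd x a (x a).-1)) /=; last first.
  move=> x /andP[/andP[+ _] xa1]; rewrite (suppT_split a) aT => /andP[/eqP xa0 _].
  have := ltn_ord (x a) => xaM.
  rewrite upd_upd upd_a; last by lia.
  by rewrite prednK // upd_id.
rewrite mulr_sumr; symmetry; apply: eq_big => y.
  symmetry; have [yaM|yaM] := leqP (y a).+1 M.
    rewrite upd_upd upd_a // succnK upd_id eqxx andbT !(suppT_split a) restS_upd upd_a // (sumx_split a (upd y a _)) upd_a //.
    rewrite restsum_upd (sumx_split a y) aT /= ?eqxx ?andbT addSn eqSS.
    move: (restS a T y) ((y a + restsum a y)%N == n) (y a : nat) => b c [|k] /=.
      by rewrite !andbF.
    by rewrite andbT andbC.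
  rewrite !(suppT_split a) aT /= ffunE eqxx.
  have -> : (inord (y a).+1 : 'I_M.+1) = ord0.
    by apply: val_inj; rewrite /inord /insubd insubF //= ltnS leqNgt yaM.
  transitivity false; first by [].
  symmetry; apply/negbTE; rewrite negb_and; apply/orP; right.
  rewrite (sumx_split a); apply/eqP => e; move: nM yaM; rewrite -e.
  have : (y a <= M)%N by rewrite -ltnS.
  lia.
move=> /andP[_ /eqP sy].
have yaM : ((y a).+1 <= M)%N by apply: leq_trans nM; rewrite -sy (sumx_split a) ltnS leq_addr.
by rewrite !(prod_split a) upd_a // restprod_upd exprS mulrA.
Qed.


Lemma sumx0 (x : {ffun 'I_s -> 'I_M.+1}) i : sumx x = 0%N -> (x i : nat) = 0%N.
Proof. by rewrite (sumx_split i) => /eqP; rewrite addn_eq0 => /andP[/eqP]. Qed.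

Lemma Qs0 (U : {set 'I_s}) : Qs U 0 = (U == set0)%:R.
Proof.
rewrite /Qs; case: (U =P set0) => [->|/eqP /set0Pn [u uU]].
  rewrite (big_pred1 [ffun _ => ord0]) /=.
    by rewrite big1 // => i _; rewrite ffunE expr0.
  move=> x /=; apply/andP/eqP => [[_ /eqP s0]|->].
    by apply/ffunP => i; apply: val_inj; rewrite ffunE /= (sumx0 i s0).
  split; first by apply/forallP => i; rewrite ffunE in_set0.
  by rewrite /sumx big1 // => i _; rewrite ffunE.
rewrite big_pred0 // => x; apply/negbTE; apply/nandP.
case: (sumx x =P 0%N) => [s0|]; last by right.
left; rewrite (suppT_split u) uU (sumx0 u s0) /=.
by [].
Qed.

Lemma Qs_set0 n : (0 < n)%N -> Qs set0 n = 0.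
Proof.
move=> n0; rewrite /Qs big_pred0 // => x; apply/negbTE; apply/nandP.
case sx: (suppT set0 x); last by left.
move/forallP: sx => H; right; have s0 : sumx x = 0%N.
  rewrite /sumx big1 // => i _; move: (H i); rewrite in_set0.
  by case: (x i) => [[|k] ?].
by rewrite s0 eq_sym -lt0n n0.
Qed.

Lemma Qs_main n : (n.+1 <= M)%N -> forall T : {set 'I_s}, T != set0 ->
  Qs T n.+1 = (\prod_(i in T) w i) * Sg T n.
Proof.
elim: n => [|n IH] nM T /set0Pn [a aT].
  have T0 : (T == set0) = false by apply/negbTE/set0Pn; exists a.
  rewrite (Qs_rec aT) // !Qs0 T0.
  rewrite add0r Sg0 (cardsD1 a T) aT add1n eqSS cards_eq0.
  case: eqP => [Ta|_]; last by rewrite !mulr0.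
  have -> : T = [set a].
    apply/setP => i; rewrite in_set1; case: (i =P a) => [->//|/eqP ia].
    by apply/negbTE; move/setP: Ta => /(_ i); rewrite in_setD1 ia in_set0 /= => ->.
  by rewrite big_set1 !mulr1.
rewrite (Qs_rec aT) // (IH (ltnW nM) T) //; last by apply/set0Pn; exists a.
have -> : Qs (T :\ a) n.+1 = (\prod_(i in T :\ a) w i) * Sg (T :\ a) n.
  case: (T :\ a =P set0) => [->|/eqP Ta]; last by apply: IH => //; apply: ltnW.
  by rewrite Qs_set0 // /Sg !big_set0 mulr0.
rewrite (Sg_shift _ aT) (big_setD1 a aT) /=.
ring.
Qed.

End Core.

Lemma comp_sum (F : fieldType) (s eta : nat) (w : 'I_s -> F) (i0 : 'I_s) :
  injective w -> (0 < eta)%N ->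
  \sum_(x : {ffun 'I_s -> 'I_eta.+1} | composition x) \prod_(i < s) w i ^+ (x i : nat) =
  (\prod_(i < s) w i) * \sum_(l < s) w l ^+ eta.-1 / \prod_(j < s | j != l) (w l - w j).
Proof.
move=> winj eta0.
have := @Qs_main F s eta w winj eta.-1; rewrite prednK // => /(_ (leqnn _) setT).
rewrite /Qs /Sg /Pi.
have -> : [set: 'I_s] != set0 by apply/set0Pn; exists i0.
move=> /(_ isT) E.
have E1 : \prod_(i in [set: 'I_s]) w i = \prod_(i < s) w i by apply: eq_bigl => i; rewrite in_setT.
have H : forall l, \prod_(j in [set: 'I_s] | j != l) (w l - w j) = \prod_(j < s | j != l) (w l - w j).
  by move=> l; apply: eq_bigl => j; rewrite in_setT.
have E2 : \sum_(l < s) w l ^+ eta.-1 / \prod_(j < s | j != l) (w l - w j) = \sum_(l in [set: 'I_s]) w l ^+ eta.-1 / \prod_(j in [set: 'I_s] | j != l) (w l - w j).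
  by apply: eq_big => [l|l _]; rewrite ?in_setT ?H.
rewrite E2 -E1 -{}E; apply: eq_bigl => x.
rewrite /composition /suppT; congr (_ && _).
by apply: eq_forallb => i; rewrite in_setT eqb_id.
Qed.

Section DopSec.
Variables (K : comNzRingType) (s : nat).
Implicit Types (p q : {mpoly K[s]}).

Definition Dop (a : 'I_s) p : {mpoly K[s]} := 'X_a * mderiv a p.

Lemma DopE a p m : (Dop a p)@_m = p@_m *+ m a.
Proof.
rewrite /Dop mulrC; case: (posnP (m a)) => [ma0|ma_gt0].
  rewrite ma0 mulr0n; apply: memN_msupp_eq0; apply/negP => H.
  have E := perm_mem (msuppMX (mderiv a p) U_(a)).
  move: H; rewrite E => /mapP [m' _ em].
  by move: ma0; rewrite em mnmDE mnm1E eqxx.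
set m' := (m - U_(a))%MM.
have em : m = (U_(a) + m')%MM.
  rewrite addmC submK //; apply/mnm_lepP => i; rewrite mnm1E.
  by case: eqP => // <-.
rewrite {1}em mcoeffMX mcoeff_deriv -addmC -em.
congr (_ *+ _); rewrite /m' mnmBE mnm1E eqxx subn1 prednK //.
Qed.

Lemma DopD a p q : Dop a (p + q) = Dop a p + Dop a q.
Proof. by apply/mpolyP => m; rewrite mcoeffD !DopE mcoeffD mulrnDl. Qed.
Lemma DopN a p : Dop a (- p) = - Dop a p.
Proof. by apply/mpolyP => m; rewrite mcoeffN !DopE mcoeffN mulNrn. Qed.
Lemma DopB a p q : Dop a (p - q) = Dop a p - Dop a q.
Proof. by rewrite DopD DopN. Qed.
Lemma Dop0 a : Dop a 0 = 0.
Proof. by apply/mpolyP => m; rewrite DopE !mcoeff0 mul0rn. Qed.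
Lemma DopMn a p k : Dop a (p *+ k) = Dop a p *+ k.
Proof. by apply/mpolyP => m; rewrite mcoeffMn !DopE mcoeffMn -!mulrnA mulnC. Qed.
Lemma DopZ a c p : Dop a (c *: p) = c *: Dop a p.
Proof. by apply/mpolyP => m; rewrite mcoeffZ !DopE mcoeffZ mulrnAr. Qed.
Lemma Dop_sum a (I : finType) (P : pred I) (F : I -> {mpoly K[s]}) :
  Dop a (\sum_(i | P i) F i) = \sum_(i | P i) Dop a (F i).
Proof. exact: (big_morph (Dop a) (DopD a) (Dop0 a)). Qed.
Lemma DopM a p q : Dop a (p * q) = Dop a p * q + p * Dop a q.
Proof. by rewrite /Dop mderivM mulrDr; congr (_ + _); [rewrite mulrA | rewrite mulrCA]. Qed.
Lemma DopXn a p k : Dop a (p ^+ k.+1) = (p ^+ k * Dop a p) *+ k.+1.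
Proof.
elim: k => [|k IH]; first by rewrite expr1 expr0 mul1r.
rewrite exprS DopM IH mulrnAr mulrA -exprS [Dop a p * _]mulrC.
by rewrite -mulrS.
Qed.
Lemma Dop_monom a m : Dop a 'X_[m] = (m a)%:R *: 'X_[m].
Proof.
apply/mpolyP => k; rewrite DopE mcoeffZ !mcoeffX.
by case: (m =P k) => [->|_]; rewrite ?mulr0 ?mul0rn // mulr1 mulr1n.
Qed.
Lemma DopC a c : Dop a c%:MP = 0.
Proof. by rewrite /Dop mderivC mulr0. Qed.

Lemma Dop_homog a d p : p \is d.-homog -> Dop a p \is d.-homog.
Proof.
move=> /dhomogP H; apply/dhomogP => m; rewrite mcoeff_msupp DopE => nz.
apply: H; rewrite mcoeff_msupp; apply: contraNneq nz => ->; by rewrite mul0rn.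
Qed.

Definition Vg : {mpoly K[s]} := \prod_(i < s) \prod_(j < s | (i < j)%N) ('X_i - 'X_j).

End DopSec.

Lemma map_Dop (K1 K2 : comNzRingType) (f : {rmorphism K1 -> K2}) s a (p : {mpoly K1[s]}) :
  map_mpoly f (Dop a p) = Dop a (map_mpoly f p).
Proof. apply/mpolyP => m; by rewrite mcoeff_map_mpoly !DopE mcoeff_map_mpoly raddfMn. Qed.

Lemma map_Vg (K1 K2 : comNzRingType) (f : {rmorphism K1 -> K2}) s :
  map_mpoly f (Vg K1 s) = Vg K2 s.
Proof.
rewrite /Vg rmorph_prod; apply: eq_bigr => i _; rewrite rmorph_prod; apply: eq_bigr => j _.
by rewrite rmorphB; congr (_ - _); apply: map_mpolyX.
Qed.


Lemma prod_homog (K : comNzRingType) s (I : finType) (P : pred I) (F : I -> {mpoly K[s]}) (d : I -> nat) :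
  (forall i, P i -> F i \is (d i).-homog) -> \prod_(i | P i) F i \is (\sum_(i | P i) d i)%N.-homog.
Proof.
move=> H; apply: (big_ind2 (fun p e => p \is e.-homog)) => //.
  exact: dhomog1.
by move=> p1 e1 p2 e2 h1 h2; apply: dhomogM.
Qed.

Lemma homogXsub (K : comNzRingType) s (i j : 'I_s) : ('X_i - 'X_j : {mpoly K[s]}) \is 1%N.-homog.
Proof.
apply: dhomogD; first by rewrite dhomogX /= mdeg1.
by rewrite dhomogN dhomogX /= mdeg1.
Qed.

Lemma homog_eq (K : comNzRingType) s d e (p : {mpoly K[s]}) : d = e -> p \is d.-homog -> p \is e.-homog.
Proof. by move=> ->. Qed.

Lemma triang s : (\sum_(i < s) \sum_(j < s | (i < j)%N) 1)%N = 'C(s, 2).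
Proof.
have E : forall n, (\sum_(i < n) \sum_(j < n | (i < j)%N) 1)%N = (\sum_(0 <= i < n) \sum_(0 <= j < n | (i < j)%N) 1)%N.
  by move=> n; rewrite big_mkord; apply: eq_bigr => i _; rewrite big_mkord.
rewrite E; elim: s => [|s IH]; first by rewrite big_geq.
rewrite big_nat_recr //= binS bin1 -IH.
have -> : (\sum_(0 <= j < s.+1 | (s < j)%N) 1 = 0)%N.
  rewrite big1_seq // => j /andP[sj]; rewrite mem_index_iota => /andP[_ js]; lia.
rewrite addn0.
have -> : (\sum_(0 <= i < s) \sum_(0 <= j < s.+1 | (i < j)%N) 1 = \sum_(0 <= i < s) (\sum_(0 <= j < s | (i < j)%N) 1 + 1))%N.
  apply: eq_big_nat => i /andP[_ iS]; by rewrite big_mkcond big_nat_recr //= iS -big_mkcond.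
by rewrite big_split /= sum_nat_const_nat subn0 muln1 addnC.
Qed.

Lemma Vg_homog (K : comNzRingType) s : Vg K s \is 'C(s, 2).-homog.
Proof.
apply: (homog_eq (triang s)); apply: prod_homog => i _; apply: prod_homog => j _.
exact: homogXsub.
Qed.

Definition Gf (K : comNzRingType) s (X : 'I_s -> K) (l : 'I_s) : K :=
  (-1) ^+ #|[pred i : 'I_s | (i < l)%N]| *
  \prod_(i < s | i != l) \prod_(j < s | (i < j)%N && (j != l)) (X i - X j).

Lemma V_fact (K : comNzRingType) s (X : 'I_s -> K) (l : 'I_s) :
  \prod_(i < s) \prod_(j < s | (i < j)%N) (X i - X j) =
  (\prod_(j < s | j != l) (X l - X j)) * Gf X l.
Proof.
rewrite (bigD1 l) //=.
have E1 : forall i : 'I_s, i != l -> \prod_(j < s | (i < j)%N) (X i - X j) =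
    (\prod_(j < s | (i < j)%N && (j != l)) (X i - X j)) * (if (i < l)%N then X i - X l else 1).
  move=> i il; rewrite (bigID (fun j => j == l)) /= mulrC; congr (_ * _).
  case: ltnP => [iL|Li].
    by rewrite (big_pred1 l) // => j /=; case: (j =P l) => [->|]; rewrite ?iL ?andbF.
  rewrite big_pred0 // => j; case: (j =P l) => [->|]; rewrite ?andbF //.
  by rewrite ltnNge Li.
rewrite (eq_bigr _ E1) big_split /=.
have E2 : \prod_(i < s | i != l) (if (i < l)%N then X i - X l else 1) =
   (-1) ^+ #|[pred i : 'I_s | (i < l)%N]| * \prod_(i < s | (i < l)%N) (X l - X i).
  rewrite -big_mkcondr /=.
  rewrite (eq_bigl (fun i : 'I_s => (i < l)%N)); last first.
    by move=> i; case: (i =P l) => [->|]; rewrite ?ltnn ?andbT.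
  rewrite -prodrN; apply: eq_bigr => i _; by rewrite opprB.
rewrite E2.
have E3 : \prod_(j < s | j != l) (X l - X j) = (\prod_(j < s | (l < j)%N) (X l - X j)) * \prod_(j < s | (j < l)%N) (X l - X j).
  rewrite (bigID (fun j : 'I_s => (j < l)%N)) /= mulrC; congr (_ * _).
    by apply: eq_bigl => j; rewrite -(inj_eq val_inj) /=; case: ltngtP.
  by apply: eq_bigl => j; rewrite -(inj_eq val_inj) /=; case: ltngtP.
rewrite E3 /Gf.
set A := \prod_(j < s | (l < j)%N) _.
set B := \prod_(i < s | i != l) _.
set C := \prod_(j < s | (j < l)%N) _.
set S := (-1) ^+ _.
ring.
Qed.

Local Notation A := {poly Rr}.

Definition mx s eta (x : {ffun 'I_s -> 'I_eta.+1}) : 'X_{1..s} := [multinom (x i : nat) | i < s].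

Definition Pw s eta (al : seq 'I_s) : {mpoly Rr[s]} :=
  \sum_(x : {ffun 'I_s -> 'I_eta.+1} | composition x)
    (\prod_(a <- al) ((x a : nat)%:R : Rr)) *: 'X_[mx x].

Lemma Pw_cons s eta a (al : seq 'I_s) : Pw eta (a :: al) = Dop a (Pw eta al).
Proof.
rewrite /Pw Dop_sum; apply: eq_bigr => x _.
by rewrite DopZ Dop_monom scalerA big_cons mnmE mulrC.
Qed.

Definition Ev s (eta : nat) (p : {mpoly A[s]}) : {mpoly Rr[s]} :=
  map_mpoly (horner_eval (eta%:R : Rr)) p.

Lemma Ev_polyC s eta (p : {mpoly Rr[s]}) : Ev eta (map_mpoly polyC p) = p.
Proof. by apply/mpolyP => m; rewrite !mcoeff_map_mpoly /= horner_evalE hornerC. Qed.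

Lemma map_homog (K1 K2 : nzRingType) (f : {additive K1 -> K2}) s d (p : {mpoly K1[s]}) :
  p \is d.-homog -> map_mpoly f p \is d.-homog.
Proof.
move=> /dhomogP H; apply/dhomogP => m; rewrite mcoeff_msupp mcoeff_map_mpoly => nz.
apply: H; rewrite mcoeff_msupp; apply: contraNneq nz => ->; by rewrite raddf0.
Qed.

Definition Gm s (l : 'I_s) : {mpoly Rr[s]} := Gf (fun i => 'X_i) l.
Definition pim s (l : 'I_s) : {mpoly Rr[s]} := \prod_(j < s | j != l) ('X_l - 'X_j).

Lemma Vg_fact s (l : 'I_s) : Vg Rr s = pim l * Gm l.
Proof. exact: (V_fact (fun i => 'X_i : {mpoly Rr[s]}) l). Qed.

Lemma Vg_neq0 s : Vg Rr s != 0.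
Proof.
apply/negP => /eqP V0.
have := congr1 (meval (fun i : 'I_s => ((i : nat)%:R : Rr))) V0.
rewrite /Vg rmorph_prod raddf0 => /eqP; apply/negP.
apply/prodf_neq0 => i _; rewrite rmorph_prod; apply/prodf_neq0 => j ij.
rewrite rmorphB /= !mevalXU subr_eq0 Num.Theory.eqr_nat.
by rewrite neq_ltn ij.
Qed.

Lemma pim_homog s (l : 'I_s) : pim l \is s.-1.-homog.
Proof.
have -> : s.-1 = (\sum_(j < s | j != l) 1)%N.
  by rewrite (eq_bigl (mem (predC1 l))) // sum1_card cardC1 card_ord.
by apply: prod_homog => j _; exact: homogXsub.
Qed.

Lemma Gm_homog s (l : 'I_s) : (2 <= s)%N -> Gm l \is ('C(s, 2) - s.-1)%N.-homog.
Proof.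
move=> s2.
have [d Hd] : exists d, Gm l \is d.-homog.
  eexists; apply: dhomogM.
    apply: dhomogMn; rewrite dhomogN; exact: dhomog1.
  apply: prod_homog => i _; apply: prod_homog => j _; exact: homogXsub.
have H1 := dhomogM (pim_homog l) Hd.
rewrite -Vg_fact in H1.
have := dhomog_uniq (Vg_neq0 s) H1 (Vg_homog Rr s) => e.
by rewrite -e addKn.
Qed.

Definition Fr s (l : 'I_s) : {mpoly Rr[s]} :=
  'X_l ^+ (s - 2) * (\prod_(i < s | i != l) 'X_i) * Gm l.

Lemma Fr_homog s (l : 'I_s) : (2 <= s)%N -> Fr l \is ('C(s, 2) + s - 2)%N.-homog.
Proof.
move=> s2.
have H1 : ('X_l ^+ (s - 2) : {mpoly Rr[s]}) \is (1 * (s - 2))%N.-homog.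
  by apply: dhomogMn; rewrite dhomogX /= mdeg1.
have H2 : (\prod_(i < s | i != l) 'X_i : {mpoly Rr[s]}) \is (\sum_(i < s | i != l) 1)%N.-homog.
  by apply: prod_homog => i _; rewrite dhomogX /= mdeg1.
have := dhomogM (dhomogM H1 H2) (Gm_homog l s2).
apply: homog_eq.
rewrite (eq_bigl (mem (predC1 l))) // sum1_card cardC1 card_ord.
have : (s.-1 <= 'C(s, 2))%N.
  case: s s2 l {H1 H2} => [|[|s']] // _ _.
  by rewrite binS bin1 /= leq_addl.
lia.
Qed.

Local Notation "x %:F" := (@FracField.tofrac _ x).

Lemma tofrac_sum (D : idomainType) (I : finType) (P : pred I) (F : I -> D) :
  (\sum_(i | P i) F i)%:F = \sum_(i | P i) (F i)%:F.
Proof. exact: (big_morph _ (@tofracD D) (@tofrac0 D)). Qed.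
Lemma tofrac_prod (D : idomainType) (I : finType) (P : pred I) (F : I -> D) :
  (\prod_(i | P i) F i)%:F = \prod_(i | P i) (F i)%:F.
Proof. exact: (big_morph _ (@tofracM D) (@tofrac1 D)). Qed.

Lemma fld_aux (F : fieldType) (P g W Q Wm Wk : F) : P != 0 ->
  P * g * (W * Q * (Wm * Wk / P)) = W * Wm * (Wk * Q * g).
Proof. by move=> h; field. Qed.

Lemma base_id s eta : (2 <= s)%N -> (s <= eta)%N ->
  Vg Rr s * Pw eta [::] = \sum_(l < s) 'X_l ^+ (eta + 2 - s) * Fr l.
Proof.
move=> s2 se.
apply/eqP; rewrite -tofrac_eq; apply/eqP.
pose w (i : 'I_s) := (('X_i : {mpoly Rr[s]}) %:F).
have winj : injective w.
  move=> i j /eqP; rewrite tofrac_eq => /eqP eXij.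
  have := congr1 (mcoeff U_(i)) eXij; rewrite !mcoeffXU eqxx.
  by case: (j =P i) => [//|_] /eqP; rewrite Num.Theory.eqr_nat.
have i0 : 'I_s by exists 0%N; apply: leq_trans s2.
have PwE : (Pw eta [::])%:F = \sum_(x : {ffun 'I_s -> 'I_eta.+1} | composition x) \prod_(i < s) w i ^+ (x i : nat).
  rewrite /Pw tofrac_sum; apply: eq_bigr => x _.
  rewrite big_nil scale1r mpolyXE_id tofrac_prod; apply: eq_bigr => i _.
  by rewrite tofracXn mnmE.
rewrite tofracM PwE comp_sum //; last by apply: leq_trans se; apply: leq_trans s2.
rewrite tofrac_sum !mulr_sumr; apply: eq_bigr => l _.
rewrite (Vg_fact l) /Fr !tofracM !tofracXn tofrac_prod.
have E1 : \prod_(i < s | i != l) ('X_l - 'X_i)%:F = \prod_(j < s | j != l) (w l - w j).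
  by apply: eq_bigr => j _; rewrite tofracB.
have E2 : (\prod_(i < s | i != l) ('X_i : {mpoly Rr[s]}))%:F = \prod_(i < s | i != l) w i.
  by rewrite tofrac_prod.
rewrite E1 E2 [\prod_(i < s) w i](bigD1 l) //=.
have pn0 : \prod_(j < s | j != l) (w l - w j) != 0.
  apply/prodf_neq0 => j jl; rewrite subr_eq0; apply/eqP => /winj /eqP.
  by rewrite eq_sym (negbTE jl).
have -> : (eta + 2 - s = (eta.-1).+1 - (s - 2))%N by lia.
have eX : forall k : nat, ((('X_l : {mpoly Rr[s]})%:F) ^+ k) = w l ^+ k by [].
rewrite !eX.
have [m em] : exists m, ((eta.-1).+1 - (s - 2) = m.+1)%N by exists (eta - s + 1)%N; lia.
have ee : (eta.-1 = m + (s - 2))%N by lia.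
rewrite em ee exprD exprS.
move: pn0; set P := \prod_(j < s | j != l) _ => pn0.
set Q := \prod_(i < s | i != l) _.
set g := _ * _ %:F.
set W := w l; set Wm := W ^+ m; set Wk := W ^+ (s - 2).
by apply: fld_aux.
Qed.


Definition Bd s (d : nat) (p : {mpoly A[s]}) := forall m, (size p@_m <= d)%N.

Lemma Bd_add s d (p q : {mpoly A[s]}) : Bd d p -> Bd d q -> Bd d (p + q).
Proof.
move=> hp hq m; rewrite mcoeffD; apply: leq_trans (size_polyD _ _) _.
by rewrite geq_max hp hq.
Qed.
Lemma Bd_opp s d (p : {mpoly A[s]}) : Bd d p -> Bd d (- p).
Proof. by move=> hp m; rewrite mcoeffN size_polyN. Qed.
Lemma Bd_sub s d (p q : {mpoly A[s]}) : Bd d p -> Bd d q -> Bd d (p - q).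
Proof. by move=> hp hq; apply: Bd_add => //; apply: Bd_opp. Qed.
Lemma Bd_mulrn s d (p : {mpoly A[s]}) k : Bd d p -> Bd d (p *+ k).
Proof. by move=> hp m; rewrite mcoeffMn -scaler_nat; apply: leq_trans (size_scale_leq _ _) _. Qed.
Lemma Bd_0 s d : Bd d (0 : {mpoly A[s]}).
Proof. by move=> m; rewrite mcoeff0 size_poly0. Qed.
Lemma Bd_le s d e (p : {mpoly A[s]}) : (d <= e)%N -> Bd d p -> Bd e p.
Proof. by move=> de hp m; apply: leq_trans de. Qed.
Lemma Bd_Dop s d a (p : {mpoly A[s]}) : Bd d p -> Bd d (Dop a p).
Proof. by move=> hp m; rewrite DopE -scaler_nat; apply: leq_trans (size_scale_leq _ _) _. Qed.
Lemma pred_add1 x y d : (x <= 1)%N -> (y <= d)%N -> ((x + y).-1 <= d)%N.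
Proof. lia. Qed.
Lemma pred_add2 x y d : (x <= 2)%N -> (y <= d)%N -> ((x + y).-1 <= d.+1)%N.
Proof. lia. Qed.

Lemma Bd_mulC s d (r : {mpoly Rr[s]}) (p : {mpoly A[s]}) : Bd d p -> Bd d (map_mpoly polyC r * p).
Proof.
move=> hp m; rewrite mcoeffM; apply: leq_trans (size_sum _ _ _) _.
apply/bigmax_leqP => k _; rewrite mcoeff_map_mpoly.
apply: leq_trans (size_polyMleq _ _) _.
exact: pred_add1 (size_polyC_leq1 _) (hp _).
Qed.
Lemma Bd_polyC s (r : {mpoly Rr[s]}) : Bd 1 (map_mpoly polyC r).
Proof. by move=> m; rewrite mcoeff_map_mpoly size_polyC_leq1. Qed.
Lemma Bd_mulN s d (N : A) (p : {mpoly A[s]}) : (size N <= 2)%N -> Bd d p -> Bd d.+1 (N%:MP * p).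
Proof.
move=> hN hp m; rewrite mcoeffCM; apply: leq_trans (size_polyMleq _ _) _.
exact: pred_add2 hN (hp _).
Qed.

Lemma homogC (K : comNzRingType) s (c : K) : (c%:MP : {mpoly K[s]}) \is 0%N.-homog.
Proof. by rewrite -[c%:MP]mulr1 mul_mpolyC; apply: dhomogZ; exact: dhomog1. Qed.

Lemma homog_mulrn (K : comNzRingType) s d (p : {mpoly K[s]}) k : p \is d.-homog -> p *+ k \is d.-homog.
Proof. by move=> hp; rewrite -scaler_nat; apply: dhomogZ. Qed.

Lemma homog_if (K : comNzRingType) s d (b : bool) (p : {mpoly K[s]}) : p \is d.-homog -> (if b then p else 0) \is d.-homog.
Proof. by case: b => // _; exact: dhomog0. Qed.

Definition Inv s (al : seq 'I_s) (F : 'I_s -> {mpoly A[s]}) :=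
  [/\ forall l, F l \is (2 ^ size al * 'C(s, 2) + s - 2)%N.-homog,
      forall l, Bd (size al).+1 (F l) &
      forall eta, (s <= eta)%N ->
        Vg Rr s ^+ (2 ^ size al) * Pw eta al = \sum_(l < s) 'X_l ^+ (eta + 2 - s) * Ev eta (F l)].

Lemma Inv_base s : (2 <= s)%N -> Inv [::] (fun l : 'I_s => map_mpoly polyC (Fr l)).
Proof.
move=> s2; split => /=.
- move=> l; rewrite expn0 mul1n; apply: map_homog; exact: Fr_homog.
- move=> l; exact: Bd_polyC.
- move=> eta se; rewrite expr1 base_id //; apply: eq_bigr => l _; by rewrite Ev_polyC.
Qed.

Definition Nn s : {mpoly A[s]} := (('X : A) + ((2 : Rr) - s%:R)%:P)%:MP.

Definition Fs s (k : nat) (a : 'I_s) (F : 'I_s -> {mpoly A[s]}) (l : 'I_s) : {mpoly A[s]} :=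
  Vg A s ^+ (2 ^ k) * ((if a == l then Nn s * F l else 0) + Dop a (F l))
  - (Vg A s ^+ (2 ^ k).-1 * Dop a (Vg A s) * F l) *+ 2 ^ k.

Lemma VgA s : Vg A s = map_mpoly polyC (Vg Rr s).
Proof. by rewrite map_Vg. Qed.

Lemma Ev_Vg s eta : Ev eta (Vg A s) = Vg Rr s.
Proof. by rewrite /Ev map_Vg. Qed.

Lemma Ev_Nn s eta : (s <= eta + 2)%N -> Ev eta (Nn s) = ((eta + 2 - s)%N%:R)%:MP.
Proof.
move=> h; rewrite /Ev /Nn map_mpolyC /= horner_evalE hornerD hornerX hornerC.
by rewrite natrB // natrD addrA.
Qed.

Lemma Dop_Xn s a (l : 'I_s) n :
  Dop a ('X_l ^+ n : {mpoly Rr[s]}) = ((l == a) * n)%N%:R *: 'X_l ^+ n.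
Proof. by rewrite mpolyXn Dop_monom mulmnE mnm1E. Qed.

Lemma Ev_add s eta (p q : {mpoly A[s]}) : Ev eta (p + q) = Ev eta p + Ev eta q.
Proof. exact: rmorphD. Qed.
Lemma Ev_sub s eta (p q : {mpoly A[s]}) : Ev eta (p - q) = Ev eta p - Ev eta q.
Proof. exact: rmorphB. Qed.
Lemma Ev_mul s eta (p q : {mpoly A[s]}) : Ev eta (p * q) = Ev eta p * Ev eta q.
Proof. exact: rmorphM. Qed.
Lemma Ev_Xn s eta (p : {mpoly A[s]}) k : Ev eta (p ^+ k) = Ev eta p ^+ k.
Proof. exact: rmorphXn. Qed.
Lemma Ev_Mn s eta (p : {mpoly A[s]}) k : Ev eta (p *+ k) = Ev eta p *+ k.
Proof. exact: rmorphMn. Qed.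
Lemma Ev_0 s eta : Ev eta (0 : {mpoly A[s]}) = 0.
Proof. exact: rmorph0. Qed.
Lemma Ev_Dop s eta a (p : {mpoly A[s]}) : Ev eta (Dop a p) = Dop a (Ev eta p).
Proof. exact: map_Dop. Qed.

Lemma Inv_step s (al : seq 'I_s) F a : (2 <= s)%N -> Inv al F -> Inv (a :: al) (Fs (size al) a F).
Proof.
move=> s2; rewrite /Inv => -[Hh Hb Hid]; set k := size al.
have K0 : (0 < 2 ^ k)%N by rewrite expn_gt0.
split => /=.
- move=> l; rewrite -/k.
  have e1 : (2 ^ k.+1 * 'C(s, 2) + s - 2 = 'C(s, 2) * 2 ^ k + (0 + (2 ^ k * 'C(s, 2) + s - 2)))%N.
    rewrite expnS; lia.
  apply: dhomogD.
    rewrite e1; apply: dhomogM; first exact/dhomogMn/Vg_homog.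
    apply: dhomogD; first by apply: homog_if; apply: dhomogM; [exact: homogC | exact: Hh].
    by rewrite add0n; apply: Dop_homog; exact: Hh.
  rewrite dhomogN; apply: homog_mulrn.
  have e2 : (2 ^ k.+1 * 'C(s, 2) + s - 2 = ('C(s, 2) * (2 ^ k).-1 + 'C(s, 2)) + (2 ^ k * 'C(s, 2) + s - 2))%N.
    rewrite expnS; move: K0; move: (2 ^ k)%N => K K0; rewrite -subn1; nia.
  rewrite e2; apply: dhomogM; last exact: Hh.
  by apply: dhomogM; [exact/dhomogMn/Vg_homog | apply: Dop_homog; exact: Vg_homog].
- move=> l; rewrite -/k; apply: Bd_sub.
    rewrite VgA -rmorphXn; apply: Bd_mulC; apply: Bd_add.
      case: (a == l); last exact: Bd_0.
      by apply: Bd_mulN; [rewrite size_XaddC | exact: Hb].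
    by apply: (Bd_le (leqnSn _)); apply: Bd_Dop.
  apply: Bd_mulrn; rewrite VgA -rmorphXn -map_Dop -rmorphM; apply: Bd_mulC.
  by apply: (Bd_le (leqnSn _)).
- move=> eta se; rewrite -/k.
  set V := Vg Rr s; set K := (2 ^ k)%N; set n := (eta + 2 - s)%N.
  have HK := Hid eta se; rewrite -/V -/K in HK.
  set P := Pw eta al in HK *.
  rewrite Pw_cons -/P.
  have step : forall l, 'X_l ^+ n * Ev eta (Fs k a F l) =
      V ^+ K * (Dop a ('X_l ^+ n) * Ev eta (F l) + 'X_l ^+ n * Dop a (Ev eta (F l)))
      - (V ^+ K.-1 * Dop a V) *+ K * ('X_l ^+ n * Ev eta (F l)).
    move=> l; rewrite /Fs.
    have e1 : Ev eta (Dop a (F l)) = Dop a (Ev eta (F l)) by apply: Ev_Dop.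
    have e2 : Ev eta (Dop a (Vg A s)) = Dop a V by rewrite Ev_Dop Ev_Vg.
    move: (Dop a (F l)) (Dop a (Vg A s)) e1 e2 => D1 D2 e1 e2.
    rewrite Ev_sub Ev_Mn !Ev_mul Ev_add !Ev_Xn Ev_Vg e1 e2 -/V -/K.
    rewrite (fun_if (Ev eta)) Ev_0 Ev_mul Ev_Nn; last by apply: leq_trans se _; rewrite leq_addr.
    rewrite Dop_Xn eq_sym; case: eqP => _ /=.
      rewrite mul1n -mul_mpolyC -/n; ring.
    rewrite mul0n scale0r mul0r; ring.
  rewrite (eq_bigr _ (fun l _ => step l)) sumrB -!mulr_sumr -HK.
  have SA : \sum_(l < s) (Dop a ('X_l ^+ n) * Ev eta (F l) + 'X_l ^+ n * Dop a (Ev eta (F l))) = Dop a (V ^+ K * P).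
    by rewrite HK Dop_sum; apply: eq_bigr => l _; rewrite DopM.
  have DVK : Dop a (V ^+ K) = (V ^+ K.-1 * Dop a V) *+ K.
    by rewrite /K -{1}(prednK K0) DopXn prednK.
  rewrite SA DopM DVK expnS mul2n -addnn exprD -/K.
  ring.
Qed.

Lemma Inv_all s (al : seq 'I_s) : (2 <= s)%N -> exists F, Inv al F.
Proof.
move=> s2; elim: al => [|a al [F HF]].
  by exists (fun l => map_mpoly polyC (Fr l)); exact: Inv_base.
by exists (Fs (size al) a F); exact: Inv_step.
Qed.

Lemma meval_sum s (w : 'I_s -> Rr) (I : finType) (P : pred I) (G : I -> {mpoly Rr[s]}) :
  (\sum_(i | P i) G i).@[w] = \sum_(i | P i) (G i).@[w].
Proof. exact: (big_morph _ (mevalD w) (meval0 w)). Qed.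
Lemma meval_prod s (w : 'I_s -> Rr) (I : finType) (P : pred I) (G : I -> {mpoly Rr[s]}) :
  (\prod_(i | P i) G i).@[w] = \prod_(i | P i) (G i).@[w].
Proof. exact: (big_morph _ (mevalM w) (meval1 w)). Qed.

Lemma mevalXn s (w : 'I_s -> Rr) (p : {mpoly Rr[s]}) k : (p ^+ k).@[w] = p.@[w] ^+ k.
Proof. by elim: k => [|k IH]; rewrite ?expr0 ?meval1 // !exprS mevalM IH. Qed.

Lemma Pw_eval s q eta (alpha : 'I_q -> 'I_s) (w : 'I_s -> Rr) :
  (Pw eta (map alpha (enum 'I_q))).@[w] = lhsA2 eta alpha w.
Proof.
rewrite /Pw /lhsA2 meval_sum; apply: eq_bigr => x _.
rewrite mevalZ mevalX big_map big_enum /=; congr (_ * _).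
by apply: eq_bigr => i _; rewrite mnmE.
Qed.

Lemma Vg_eval s (w : 'I_s -> Rr) : (Vg Rr s).@[w] = vdm w.
Proof.
rewrite /Vg /vdm meval_prod; apply: eq_bigr => i _; rewrite meval_prod; apply: eq_bigr => j _.
by rewrite mevalB !mevalXU.
Qed.

Unset Implicit Arguments.
Theorem lemmaA2 (s q : nat) (alpha : 'I_q -> 'I_s) :
  (2 <= s)%N ->
  exists f : 'I_s -> {mpoly {poly Rr}[s]},
    (forall l, f l \is (2 ^ q * 'C(s, 2) + s - 2)%N.-homog) /\
    (forall l (m : 'X_{1..s}), (size ((f l)@_m) <= q.+1)%N) /\
    (forall eta : nat, (s <= eta)%N ->
      forall w : 'I_s -> Rr, injective w ->
        lhsA2 eta alpha w =
        (\sum_(l < s) w l ^+ (eta + 2 - s) * evalEW (f l) (eta%:R) w)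
          / (vdm w) ^+ (2 ^ q)).
Proof.
move=> s2; have [F [Hh Hb Hid]] := Inv_all (map alpha (enum 'I_q)) s2.
have sz : size (map alpha (enum 'I_q)) = q by rewrite size_map size_enum_ord.
rewrite sz in Hh Hb Hid.
exists F; split => //; split => //.
move=> eta se w winj.
have := congr1 (meval w) (Hid eta se).
rewrite mevalM mevalXn Vg_eval Pw_eval meval_sum => E.
have vn0 : vdm w != 0.
  apply/prodf_neq0 => i _; apply/prodf_neq0 => j ij; rewrite subr_eq0.
  apply/eqP => /winj eij; by move: ij; rewrite eij ltnn.
apply: (mulfI (expf_neq0 (2 ^ q)%N vn0)); rewrite E mulrC divfK ?expf_neq0 //.
apply: eq_bigr => l _; by rewrite mevalM mevalXn mevalXU.
Qed.
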